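(* Let $a,b,c\in\mathbb{C}$ with $a\neq0$, $\Re(b)>0$, $\Re(b+a+c)>0$, $\Re(b+a-c)>0$, $\Re(b-a+c)>0$, $\Re(b-a-c)>0$, and $\frac{a+c}{b},\frac{a-c}{b}\notin\{\pm1,\pm3,\pm5,\dots\}$. Fix a square root $\sqrt{a^2-c^2}$, put $\mu=\frac{\sqrt{a^2-c^2}}{2b}$, $\tau_1=\frac12-\frac{a+c}{2b}$, $\tau_2=\frac12-\frac{a-c}{2b}$, $\tau_3=\frac12+\frac{a+c}{2b}$, $\tau_4=\frac12+\frac{a-c}{2b}$, and $Q=(b-a-c)(b+a+c)(b-a+c)(b+a-c)$. Assume $\frac12\pm\mu\notin\mathbb{Z}_0^-$ and $1+\tau_j\notin\mathbb{Z}_0^-$ ($j=1,\dots,4$). Then $$ {}_7F_6\!\left(\begin{matrix}1,\ \frac32-\mu,\ \frac32+\mu,\ \tau_1,\ \tau_2,\ \tau_3,\ \tau_4\\ \frac12-\mu,\ \frac12+\mu,\ 1+\tau_1,\ 1+\tau_2,\ 1+\tau_3,\ 1+\tau_4\end{matrix};\,1\right) =\frac{\pi Q}{4\,(ab^3-a^3b+abc^2)}\cdot\frac{\sin\!\big(\frac{a\pi}{b}\big)}{\cos\!\big(\frac{c\pi}{b}\big)+\cos\!\big(\frac{a\pi}{b}\big)}. $$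
   Context: $\mathbb{Z}_0^-=\{0,-1,-2,\dots\}$. The Pochhammer symbol is $(\lambda)_0=1$, $(\lambda)_n=\lambda(\lambda+1)\cdots(\lambda+n-1)$ for $n\ge1$. The generalized hypergeometric series is ${}_pF_q\!\left(\begin{matrix}\alpha_1,\dots,\alpha_p\\ \beta_1,\dots,\beta_q\end{matrix};z\right)=\sum_{n=0}^\infty\frac{(\alpha_1)_n\cdots(\alpha_p)_n}{(\beta_1)_n\cdots(\beta_q)_n}\frac{z^n}{n!}$ (with no $\beta_j\in\mathbb{Z}_0^-$). *)

(* Defs.v *)
From Stdlib Require Import Reals ZArith List.
Open Scope R_scope.

Definition Cplx : Type := (R * R)%type.
Definition Re (z : Cplx) : R := fst z.
Definition Im (z : Cplx) : R := snd z.
Definition RtoC (x : R) : Cplx := (x, 0).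
Definition Cadd (z w : Cplx) : Cplx := (Re z + Re w, Im z + Im w).
Definition Copp (z : Cplx) : Cplx := (- Re z, - Im z).
Definition Csub (z w : Cplx) : Cplx := Cadd z (Copp w).
Definition Cmul (z w : Cplx) : Cplx :=
  (Re z * Re w - Im z * Im w, Re z * Im w + Im z * Re w).
(* inverse; Cinv 0 = 0 by convention (never used at 0 in the statement) *)
Definition Cinv (z : Cplx) : Cplx :=
  (Re z / (Re z ^ 2 + Im z ^ 2), - Im z / (Re z ^ 2 + Im z ^ 2)).
Definition Cdiv (z w : Cplx) : Cplx := Cmul z (Cinv w).

Definition Csin (z : Cplx) : Cplx := (sin (Re z) * cosh (Im z), cos (Re z) * sinh (Im z)).
Definition Ccos (z : Cplx) : Cplx := (cos (Re z) * cosh (Im z), - (sin (Re z) * sinh (Im z))).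

Fixpoint poch (l : Cplx) (n : nat) : Cplx :=
  match n with
  | O => RtoC 1
  | S k => Cmul (poch l k) (Cadd l (RtoC (INR k)))
  end.

Definition Cprod (l : list Cplx) : Cplx := fold_right Cmul (RtoC 1) l.

Definition hyp_term (alphas betas : list Cplx) (z : Cplx) (n : nat) : Cplx :=
  Cdiv (Cmul (Cprod (map (fun a => poch a n) alphas)) (Cprod (map (fun _ => z) (seq 0 n))))
       (Cmul (Cprod (map (fun b => poch b n) betas)) (RtoC (INR (fact n)))).

Fixpoint Cpartial (f : nat -> Cplx) (N : nat) : Cplx :=
  match N with
  | O => f O
  | S k => Cadd (Cpartial f k) (f (S k))
  end.

Definition Cseries_sum (f : nat -> Cplx) (L : Cplx) : Prop :=
  Un_cv (fun N => Re (Cpartial f N)) (Re L) /\ Un_cv (fun N => Im (Cpartial f N)) (Im L).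

Definition pFq_eq (alphas betas : list Cplx) (z L : Cplx) : Prop :=
  Cseries_sum (hyp_term alphas betas z) L.

Definition in_Z0minus (z : Cplx) : Prop := exists n : nat, z = RtoC (- INR n).

Definition odd_int (z : Cplx) : Prop := exists k : Z, z = RtoC (IZR (2 * k + 1)).

(* Main.v *)
From Stdlib Require Import Reals Lra Lia ZArith List Classical.
Import ListNotations.
From Coquelicot Require Import Coquelicot.
Require Import Defs.
Open Scope R_scope.
Notation CR := Complex.RtoC.

Lemma cosh_plus a b : cosh (a+b) = cosh a * cosh b + sinh a * sinh b.
Proof. unfold cosh, sinh. rewrite Ropp_plus_distr, !exp_plus. 
 assert (exp a * exp (-a) = 1) by (rewrite <- exp_plus; replace (a + -a) with 0 by ring; apply exp_0).
 assert (exp b * exp (-b) = 1) by (rewrite <- exp_plus; replace (b + -b) with 0 by ring; apply exp_0).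
 field_simplify. nra. Qed.
Lemma sinh_plus a b : sinh (a+b) = sinh a * cosh b + cosh a * sinh b.
Proof. unfold cosh, sinh. rewrite Ropp_plus_distr, !exp_plus. 
 assert (exp a * exp (-a) = 1) by (rewrite <- exp_plus; replace (a + -a) with 0 by ring; apply exp_0).
 assert (exp b * exp (-b) = 1) by (rewrite <- exp_plus; replace (b + -b) with 0 by ring; apply exp_0).
 field_simplify. nra. Qed.
Lemma cosh_sinh a : cosh a * cosh a - sinh a * sinh a = 1.
Proof. unfold cosh, sinh.
 assert (exp a * exp (-a) = 1) by (rewrite <- exp_plus; replace (a + -a) with 0 by ring; apply exp_0).
 field_simplify. nra. Qed.
Lemma cosh_opp a : cosh (-a) = cosh a.
Proof. unfold cosh. rewrite Ropp_involutive. field. Qed.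
Lemma sinh_opp a : sinh (-a) = - sinh a.
Proof. unfold sinh. rewrite Ropp_involutive. field. Qed.

Lemma Csin_add u v : Csin (Cplus u v) = Cplus (Cmult (Csin u) (Ccos v)) (Cmult (Ccos u) (Csin v)).
Proof. destruct u as [x y], v as [x' y']. unfold Csin, Ccos, Cplus, Cmult, Defs.Re, Defs.Im; simpl.
 rewrite sin_plus, cosh_plus, cos_plus, sinh_plus. f_equal. all: ring. Qed.
Lemma Ccos_add u v : Ccos (Cplus u v) = Cminus (Cmult (Ccos u) (Ccos v)) (Cmult (Csin u) (Csin v)).
Proof. destruct u as [x y], v as [x' y']. unfold Csin, Ccos, Cminus, Cplus, Cmult, Complex.Copp, Defs.Re, Defs.Im; simpl.
 rewrite sin_plus, cosh_plus, cos_plus, sinh_plus. f_equal. all: ring. Qed.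
Lemma Csin_Ccos u : Cplus (Cmult (Csin u) (Csin u)) (Cmult (Ccos u) (Ccos u)) = CR 1.
Proof. destruct u as [x y]. unfold Csin, Ccos, Cplus, Cmult, Defs.Re, Defs.Im, Complex.RtoC; simpl.
 pose proof (cosh_sinh y). pose proof (sin2_cos2 x). unfold Rsqr in *. f_equal; nra. Qed.
Lemma Csin_R r : Csin (CR r) = CR (sin r).
Proof. unfold Csin, Complex.RtoC, Defs.Re, Defs.Im; simpl. rewrite cosh_0, sinh_0. f_equal; ring. Qed.
Lemma Ccos_R r : Ccos (CR r) = CR (cos r).
Proof. unfold Ccos, Complex.RtoC, Defs.Re, Defs.Im; simpl. rewrite cosh_0, sinh_0. f_equal; ring. Qed.

Definition Cscal (r : R) (z : C) : C := (r * fst z, r * snd z).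
Definition den (u : C) (c : R) : C := Cminus (CR (sin c * sin c)) (Cmult (Csin u) (Csin u)).
Definition Rf (u : C) (c : R) : C := Complex.Cdiv (Csin (Cscal 2 u)) (den u c).

Lemma Cscal2 u : Cscal 2 u = Cplus u u.
Proof. destruct u; unfold Cscal, Cplus; simpl; f_equal; ring. Qed.
Lemma Csin2 u : Csin (Cscal 2 u) = Cmult (CR 2) (Cmult (Csin u) (Ccos u)).
Proof. rewrite Cscal2, Csin_add. 
 destruct (Csin u), (Ccos u). unfold Cplus, Cmult, Complex.RtoC; simpl; f_equal; ring. Qed.
Lemma Ccos2 u : Ccos (Cscal 2 u) = Cminus (Cmult (Ccos u) (Ccos u)) (Cmult (Csin u) (Csin u)).
Proof. rewrite Cscal2, Ccos_add. reflexivity. Qed.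

Lemma C_eq_of_sub (x y : C) : Cminus x y = CR 0 -> x = y.
Proof. intro H. replace x with (Cplus (Cminus x y) y) by ring. rewrite H. ring. Qed.

Lemma den_double u c :
  den (Cscal 2 u) (2*c) = Cmult (CR 4) (Cmult (den u c) (den u (PI/2 - c))).
Proof.
  unfold den. rewrite Csin2, sin_2a, sin_shift.
  pose proof (Csin_Ccos u) as E1.
  assert (E2 : Cplus (Cmult (CR (sin c)) (CR (sin c))) (Cmult (CR (cos c)) (CR (cos c))) = CR 1).
  { rewrite <- !RtoC_mult, <- RtoC_plus. f_equal. pose proof (sin2_cos2 c). unfold Rsqr in *. lra. }
  rewrite !RtoC_mult.
  set (S := Csin u) in *. set (K := Ccos u) in *. set (s := CR (sin c)) in *. set (k := CR (cos c)) in *.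
  apply C_eq_of_sub.
  transitivity (Cminus (Cmult (Cmult (CR 4) (Cmult S S)) (Cminus (Cplus (Cmult s s) (Cmult k k)) (CR 1)))
                       (Cmult (Cmult (CR 4) (Cmult S S)) (Cminus (Cplus (Cmult S S) (Cmult K K)) (CR 1)))).
  - ring.
  - rewrite E1, E2. ring.
Qed.

Lemma Cmult_neq0 (x y : C) : Cmult x y <> CR 0 -> x <> CR 0 /\ y <> CR 0.
Proof. intro H; split; intro E; apply H; rewrite E; ring. Qed.

Lemma Rf_double u c : den (Cscal 2 u) (2*c) <> CR 0 ->
  den u c <> CR 0 /\ den u (PI/2 - c) <> CR 0 /\
  Rf (Cscal 2 u) (2*c) = Cmult (CR (1/2)) (Cplus (Rf u c) (Rf u (PI/2 - c))).
Proof.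
  intro H. rewrite den_double in H.
  destruct (Cmult_neq0 _ _ H) as [_ H']. destruct (Cmult_neq0 _ _ H') as [H1 H2].
  split; [exact H1|split; [exact H2|]].
  unfold Rf. rewrite den_double, Csin2, Csin2, Ccos2.
  assert (E : Cminus (Cmult (Ccos u) (Ccos u)) (Cmult (Csin u) (Csin u)) = Cplus (den u c) (den u (PI/2 - c))).
  { unfold den. rewrite sin_shift. pose proof (Csin_Ccos u) as E1.
    assert (E2 : Cplus (Cmult (CR (sin c)) (CR (sin c))) (Cmult (CR (cos c)) (CR (cos c))) = CR 1).
    { rewrite <- !RtoC_mult, <- RtoC_plus. f_equal. pose proof (sin2_cos2 c). unfold Rsqr in *. lra. }
    rewrite !RtoC_mult. apply C_eq_of_sub.
    transitivity (Cminus (Cplus (Cmult (Csin u) (Csin u)) (Cmult (Ccos u) (Ccos u))) 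
       (Cplus (Cmult (CR (sin c)) (CR (sin c))) (Cmult (CR (cos c)) (CR (cos c))))).
    - ring.
    - rewrite E1, E2. ring. }
  rewrite E. set (d1 := den u c) in *. set (d2 := den u (PI/2 - c)) in *.
  replace (CR (1/2)) with (Complex.Cinv (CR 2)).
  2:{ unfold Complex.Cinv, Complex.RtoC; simpl; f_equal; field. }
  field. auto.
Qed.

Fixpoint csum (f : nat -> C) (n : nat) : C :=
  match n with O => CR 0 | S n => Cplus (csum f n) (f n) end.

Lemma csum_ext f g n : (forall k, (k < n)%nat -> f k = g k) -> csum f n = csum g n.
Proof. induction n; simpl; intros; auto. rewrite IHn by (intros; apply H; lia). rewrite H by lia. auto. Qed.
Lemma csum_add f g n : csum (fun k => Cplus (f k) (g k)) n = Cplus (csum f n) (csum g n).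
Proof. induction n; simpl. ring. rewrite IHn. ring. Qed.
Lemma csum_mult c f n : csum (fun k => Cmult c (f k)) n = Cmult c (csum f n).
Proof. induction n; simpl. ring. rewrite IHn. ring. Qed.
Lemma csum_split f a b : csum f (a + b) = Cplus (csum f a) (csum (fun k => f (a + k)%nat) b).
Proof. induction b; simpl. rewrite Nat.add_0_r. ring. rewrite Nat.add_succ_r. simpl. rewrite IHb. ring. Qed.
Lemma csum_rev f n : csum f n = csum (fun k => f (n - 1 - k)%nat) n.
Proof. induction n. reflexivity.
  change (csum f (S n)) with (Cplus (csum f n) (f n)).
  replace (S n) with (1 + n)%nat by lia. rewrite csum_split. simpl.
  rewrite IHn. rewrite Nat.sub_0_r. replace (n - 0)%nat with n by lia.
  rewrite (csum_ext (fun k => f (n - 1 - k)%nat) (fun k => f (n - S k)%nat)) by (intros; f_equal; lia).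
  ring. Qed.
Lemma csum_pair f h : csum (fun k => Cplus (f k) (f (2*h - 1 - k)%nat)) h = csum f (2*h).
Proof. rewrite csum_add. replace (2*h)%nat with (h + h)%nat by lia. rewrite csum_split.
  f_equal. rewrite (csum_rev (fun k => f (h + k)%nat)). apply csum_ext. intros; f_equal; lia. Qed.

Definition Ctan (w : C) : C := Complex.Cdiv (Csin w) (Ccos w).
Definition bk (H : R) (k : nat) : R := (INR k + 1/2) * PI / (2 * H).

Lemma Cscal_Cscal r s z : Cscal r (Cscal s z) = Cscal (r*s) z.
Proof. destruct z; unfold Cscal; simpl; f_equal; ring. Qed.
Lemma Cscal_mult r z : Cscal r z = Cmult (CR r) z.
Proof. destruct z; unfold Cscal, Cmult, Complex.RtoC; simpl; f_equal; ring. Qed.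

Lemma sin_PI4_sq : sin (PI/4) * sin (PI/4) = 1/2.
Proof. rewrite sin_PI4. field_simplify. rewrite pow2_sqrt by lra. field. 
  intro X. pose proof (sqrt_lt_R0 2). lra. Qed.

Lemma iter_base w : Ccos w <> CR 0 ->
  den (Cscal (1/(2*1)) w) (bk 1 0) <> CR 0 /\
  Ctan w = Cscal (1/(2*1)) (csum (fun k => Rf (Cscal (1/(2*1)) w) (bk 1 k)) 1).
Proof.
  intro Hc. 
  assert (Ew : w = Cscal 2 (Cscal (1/(2*1)) w)) by (rewrite Cscal_Cscal; destruct w; unfold Cscal; simpl; f_equal; field).
  set (u := Cscal (1/(2*1)) w) in *.
  assert (Eb : bk 1 0 = PI/4) by (unfold bk; simpl; field).
  rewrite Eb. simpl csum.
  assert (Ed : Ccos w = Cmult (CR 2) (den u (PI/4))).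
  { rewrite Ew, Ccos2. unfold den. rewrite sin_PI4_sq. pose proof (Csin_Ccos u) as E1.
    apply C_eq_of_sub. transitivity (Cminus (Cplus (Cmult (Csin u) (Csin u)) (Cmult (Ccos u) (Ccos u))) (CR 1)).
    - replace (CR (1/2)) with (Complex.Cinv (CR 2)) by (unfold Complex.Cinv, Complex.RtoC; simpl; f_equal; field).
      field.
    - rewrite E1. ring. }
  rewrite Ed in Hc. destruct (Cmult_neq0 _ _ Hc) as [_ Hd]. split; auto.
  unfold Ctan, Rf. rewrite Ed. rewrite <- Ew. rewrite Cscal_mult.
  replace (CR (1/(2*1))) with (Complex.Cinv (CR 2)) by (unfold Complex.Cinv, Complex.RtoC; simpl; f_equal; field).
  rewrite Eb. match goal with |- ?a = ?b => change (@eq C a b) end. field. auto.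
Qed.

Lemma bk_double H k : H > 0 -> bk H k = 2 * bk (2*H) k.
Proof. intro; unfold bk; field; lra. Qed.
Lemma bk_refl (n : nat) H k : H = INR n -> (k < n)%nat -> PI/2 - bk (2*H) k = bk (2*H) (2*n - 1 - k).
Proof. intros -> Hk. unfold bk. rewrite minus_INR by lia. rewrite minus_INR by lia. rewrite mult_INR.
  simpl (INR 2). simpl (INR 1). field. assert (0 < INR n) by (apply lt_0_INR; lia). lra. Qed.

Lemma pow2_pos m : 0 < 2 ^ m.
Proof. apply pow_lt; lra. Qed.

Lemma iter (m : nat) : forall w, Ccos w <> CR 0 ->
  (forall k, (k < 2^m)%nat -> den (Cscal (1/(2*2^m)) w) (bk (2^m) k) <> CR 0) /\
  Ctan w = Cscal (1/(2*2^m)) (csum (fun k => Rf (Cscal (1/(2*2^m)) w) (bk (2^m) k)) (2^m)%nat).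
Proof.
  induction m as [|m IH]; intros w Hw.
  - simpl. destruct (iter_base w Hw) as [H1 H2]. split; auto.
    intros k Hk. replace k with 0%nat by lia. exact H1.
  - destruct (IH w Hw) as [Hn Ht].
    set (H := 2^m) in *. set (n := (2^m)%nat) in *.
    assert (HH : H = INR n) by (unfold H, n; rewrite pow_INR; reflexivity).
    assert (Hpos : 0 < H) by apply pow2_pos.
    change (2 ^ S m) with (2 * H). change (2 ^ S m)%nat with (2 * n)%nat.
    set (d' := Cscal (1 / (2 * (2 * H))) w).
    assert (Ed : Cscal (1/(2*H)) w = Cscal 2 d') by (unfold d'; rewrite Cscal_Cscal; f_equal; field; lra).
    assert (Hk : forall k, (k < n)%nat -> 
       den d' (bk (2*H) k) <> CR 0 /\ den d' (bk (2*H) (2*n-1-k)) <> CR 0 /\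
       Rf (Cscal (1/(2*H)) w) (bk H k) = Cmult (CR (1/2)) (Cplus (Rf d' (bk (2*H) k)) (Rf d' (bk (2*H) (2*n-1-k))))).
    { intros k Hk. pose proof (Hn k Hk) as Hd. rewrite Ed, (bk_double H k Hpos) in Hd |- *.
      rewrite <- (bk_refl n H k HH Hk). apply Rf_double. exact Hd. }
    split.
    + intros j Hj. destruct (Nat.lt_ge_cases j n) as [Hjn|Hjn].
      * apply (Hk j Hjn).
      * pose proof (Hk (2*n-1-j)%nat ltac:(lia)) as [_ [X _]]. 
        replace (2 * n - 1 - (2 * n - 1 - j))%nat with j in X by lia. exact X.
    + rewrite Ht. rewrite (csum_ext _ (fun k => Cmult (CR (1/2)) (Cplus (Rf d' (bk (2*H) k)) (Rf d' (bk (2*H) (2*n-1-k)))))).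
      2:{ intros k Hk'. apply (Hk k Hk'). }
      rewrite csum_mult, (csum_pair (fun k => Rf d' (bk (2*H) k)) n). rewrite !Cscal_mult. 
      rewrite Cmult_assoc, <- RtoC_mult. f_equal. f_equal. field. lra.
Qed.

Lemma sin_abs_le x : Rabs (sin x) <= Rabs x.
Proof. destruct (Rtotal_order x 0) as [H|[H|H]].
  - pose proof (sin_lt_x (-x) ltac:(lra)). rewrite sin_neg in H0.
    pose proof (SIN_bound x). destruct (Rle_lt_dec 0 (sin x)).
    + rewrite Rabs_pos_eq by lra. rewrite Rabs_left by lra. 
      destruct (Rle_lt_dec (-x) 1). 2: lra.
      assert (HP : - PI < x) by (pose proof PI2_3_2; lra). pose proof (sin_lt_0_var x HP H). lra.
    + rewrite Rabs_left by lra. rewrite Rabs_left by lra. lra.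
  - subst. rewrite sin_0. lra.
  - pose proof (sin_lt_x x H). rewrite (Rabs_pos_eq x) by lra.
    destruct (Rle_lt_dec 0 (sin x)). rewrite Rabs_pos_eq; lra.
    rewrite Rabs_left by lra. pose proof (SIN_bound x). 
    destruct (Rle_lt_dec x 1). 2: lra.
    assert (0 < sin x) by (apply sin_gt_0; pose proof PI2_3_2; lra). lra.
Qed.

Lemma exp2_le : exp 2 <= 9.
Proof. replace 2 with (1+1) by ring. rewrite exp_plus. pose proof exp_le_3. pose proof (exp_pos 1). nra. Qed.

Lemma sinh_pos_bound y : 0 <= y <= 2 -> 0 <= sinh y <= 9 * y.
Proof. intros [H0 H2]. unfold sinh.
  assert (E : exp y * exp (-y) = 1) by (rewrite <- exp_plus; replace (y + -y) with 0 by ring; apply exp_0).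
  pose proof (exp_ineq1_le (-2*y)). 
  assert (exp (-2*y) = exp (-y) * exp (-y)) by (rewrite <- exp_plus; f_equal; ring).
  assert (exp (-y) <= exp y) by (apply exp_le_3 || (destruct (Req_dec y 0); [subst; rewrite Ropp_0; lra| left; apply exp_increasing; lra])).
  assert (exp y <= 9) by (pose proof exp2_le; destruct (Req_dec y 2); [subst; lra|]; left; apply Rlt_le_trans with (exp 2); [apply exp_increasing; lra| lra]).
  pose proof (exp_pos y). pose proof (exp_pos (-y)).
  split; nra. Qed.

Lemma sinh_abs_bound y : Rabs y <= 2 -> Rabs (sinh y) <= 9 * Rabs y.
Proof. intro H. destruct (Rle_lt_dec 0 y).
  - rewrite Rabs_pos_eq in H by lra. pose proof (sinh_pos_bound y ltac:(lra)). 
    rewrite !Rabs_pos_eq by lra. lra.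
  - rewrite Rabs_left in H by lra. pose proof (sinh_pos_bound (-y) ltac:(lra)). rewrite sinh_opp in H0.
    rewrite (Rabs_left y) by lra. rewrite Rabs_left1 by lra. lra.
Qed.

Lemma Cmod_sq z : Cmod z * Cmod z = fst z * fst z + snd z * snd z.
Proof. unfold Cmod. rewrite sqrt_sqrt. simpl; ring. apply Rplus_le_le_0_compat; apply pow2_ge_0. Qed.

Lemma le_of_sq a b : 0 <= a -> 0 <= b -> a * a <= b * b -> a <= b.
Proof. intros. nra. Qed.

Lemma sq_abs a : Rabs a * Rabs a = a * a.
Proof. rewrite <- Rabs_mult; apply Rabs_pos_eq; nra. Qed.

Lemma Csin_bound z : Rabs (snd z) <= 2 -> Cmod (Csin z) <= 9 * Cmod z.
Proof. intro H. apply le_of_sq. apply Cmod_ge_0. pose proof (Cmod_ge_0 z); lra.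
  rewrite Cmod_sq. replace (9 * Cmod z * (9 * Cmod z)) with (81 * (Cmod z * Cmod z)) by ring.
  rewrite Cmod_sq. destruct z as [x y]. unfold Csin, Defs.Re, Defs.Im. simpl fst; simpl snd. simpl in H.
  pose proof (sin_abs_le x). pose proof (sinh_abs_bound y H). pose proof (cosh_sinh y). pose proof (sin2_cos2 x).
  unfold Rsqr in *.
  assert (sin x * sin x <= x * x) by (rewrite <- (sq_abs (sin x)), <- (sq_abs x); pose proof (Rabs_pos (sin x)); nra).
  assert (sinh y * sinh y <= 81 * (y*y)).
  { pose proof (Rabs_pos (sinh y)). pose proof (Rabs_pos y).
    rewrite <- (sq_abs (sinh y)), <- (sq_abs y). nra. }
  replace (sin x * cosh y * (sin x * cosh y) + cos x * sinh y * (cos x * sinh y)) with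
    (sin x * sin x + sinh y * sinh y) by nra.
  nra. Qed.

Lemma sin_lower b : 0 <= b <= 2 -> b / 3 <= sin b.
Proof. intros [H0 H2]. pose proof PI2_3_2. destruct (SIN b H0 ltac:(lra)) as [Hs _].
  unfold sin_lb, sin_approx, sin_term in Hs. simpl in Hs. 
  assert (b - b^3/6 + b^5/120 - b^7/5040 >= b/3).
  { assert (b*b <= 4) by nra. assert (b^3 <= 4*b) by (simpl; nra). 
    assert (b^7 <= 42 * b^5) by (replace (b^7) with (b^5*(b*b)) by ring; pose proof (pow_le b 5 H0); nra).
    pose proof (pow_le b 5 H0). lra. }
  field_simplify in Hs. lra. Qed.

Definition beta (k : nat) : R := (INR k + 1/2) * PI.
Definition Tk (w : C) (k : nat) : C :=
  Complex.Cdiv (Cscal 2 w) (Cminus (CR (beta k * beta k)) (Cmult w w)).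

Lemma beta_pos k : 0 < beta k.
Proof. unfold beta. pose proof (pos_INR k). pose proof PI_RGT_0. nra. Qed.
Lemma beta_ge k : 3 * (INR k + 1/2) <= beta k.
Proof. unfold beta. pose proof (pos_INR k). pose proof PI2_3_2. nra. Qed.

Lemma Cmod_Cscal r z : Cmod (Cscal r z) = Rabs r * Cmod z.
Proof. rewrite Cscal_mult, Cmod_mult, Cmod_R. reflexivity. Qed.
Lemma Cmod_sub_ge a b : Cmod a - Cmod b <= Cmod (Cminus a b).
Proof. pose proof (Cmod_triangle (Cminus a b) b). 
  replace (Cplus (Cminus a b) b) with a in H by ring. lra. Qed.
Lemma snd_le_Cmod z : Rabs (snd z) <= Cmod z.
Proof. pose proof (Rmax_Cmod z). pose proof (Rmax_r (Rabs (fst z)) (Rabs (snd z))). lra. Qed.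
Lemma fst_le_Cmod z : Rabs (fst z) <= Cmod z.
Proof. pose proof (Rmax_Cmod z). pose proof (Rmax_l (Rabs (fst z)) (Rabs (snd z))). lra. Qed.

Lemma tail_Rf (H : R) (n k : nat) w : H = INR n -> (k < n)%nat -> 39 * Cmod w <= beta k ->
  Cmod (Cscal (1/(2*H)) (Rf (Cscal (1/(2*H)) w) (bk H k))) <= 324 * Cmod w / (beta k * beta k).
Proof.
  intros HH Hk Hw.
  assert (Hn : INR k + 1 <= INR n) by (rewrite <- S_INR; apply le_INR; lia).
  assert (Hpos : 0 < H) by (rewrite HH; pose proof (pos_INR k); lra).
  set (h := 2 * H). assert (hpos : 0 < h) by (unfold h; lra).
  set (d := Cscal (1/h) w). set (b := bk H k).
  assert (Eb : b = beta k / h) by (unfold b, bk, beta, h; field; lra).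
  pose proof (beta_pos k) as Bp. pose proof (Cmod_ge_0 w) as Wp.
  assert (Ed : Cmod d = Cmod w / h).
  { unfold d; rewrite Cmod_Cscal, Rabs_pos_eq. field. lra. apply Rlt_le, Rdiv_lt_0_compat; lra. }
  assert (Hb2 : b <= PI/2) by (rewrite Eb; unfold beta, h; rewrite HH; apply Rmult_le_reg_r with (2 * INR n); [lra|];
       field_simplify; [|lra]; pose proof PI_RGT_0; nra).
  assert (Hb0 : 0 < b) by (rewrite Eb; apply Rdiv_lt_0_compat; lra).
  assert (Hdb : 39 * Cmod d <= b).
  { rewrite Ed, Eb; unfold Rdiv; rewrite <- Rmult_assoc; apply Rmult_le_compat_r; [left; apply Rinv_0_lt_compat; lra| lra]. }
  pose proof PI_4 as P4. pose proof (Cmod_ge_0 d) as Dp.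
  assert (H1 : Cmod (Csin (Cscal 2 d)) <= 18 * Cmod d).
  { eapply Rle_trans. apply Csin_bound. eapply Rle_trans. apply snd_le_Cmod. rewrite Cmod_Cscal, Rabs_pos_eq by lra. lra.
    rewrite Cmod_Cscal, Rabs_pos_eq by lra. lra. }
  assert (H2 : Cmod (Csin d) <= 9 * Cmod d).
  { apply Csin_bound. eapply Rle_trans. apply snd_le_Cmod. lra. }
  assert (H3 : b / 3 <= sin b) by (apply sin_lower; lra).
  assert (H4 : b * b / 18 <= Cmod (den d b)).
  { unfold den. eapply Rle_trans. 2: apply Cmod_sub_ge. rewrite Cmod_R, Cmod_mult, Rabs_pos_eq by nra.
    pose proof (Cmod_ge_0 (Csin d)). nra. }
  assert (Hden : den d b <> CR 0).
  { intro E. rewrite E, Cmod_0 in H4. nra. }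
  unfold Rf. fold d b. rewrite Cmod_Cscal, Cmod_div by exact Hden.
  rewrite Rabs_pos_eq by (apply Rlt_le, Rdiv_lt_0_compat; lra).
  assert (Hq : Cmod (Csin (Cscal 2 d)) / Cmod (den d b) <= 324 * Cmod d / (b*b)).
  { apply Rle_trans with (18 * Cmod d / (b * b / 18)).
    - unfold Rdiv. apply Rmult_le_compat; try lra. apply Cmod_ge_0. left; apply Rinv_0_lt_compat. nra.
      apply Rinv_le_contravar. nra. lra.
    - right. field. lra. }
  apply Rle_trans with (1/h * (324 * Cmod d / (b*b))).
  - apply Rmult_le_compat_l. apply Rlt_le, Rdiv_lt_0_compat; lra. exact Hq.
  - right. rewrite Ed, Eb. field. lra.
Qed.

Lemma tail_Tk w k : 39 * Cmod w <= beta k -> Cmod (Tk w k) <= 4 * Cmod w / (beta k * beta k).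
Proof. intro Hw. pose proof (beta_pos k) as Bp. pose proof (Cmod_ge_0 w) as Wp.
  assert (H4 : beta k * beta k / 2 <= Cmod (Cminus (CR (beta k * beta k)) (Cmult w w))).
  { eapply Rle_trans. 2: apply Cmod_sub_ge. rewrite Cmod_R, Cmod_mult, Rabs_pos_eq by nra. nra. }
  assert (Hden : Cminus (CR (beta k * beta k)) (Cmult w w) <> CR 0).
  { intro E. rewrite E, Cmod_0 in H4. nra. }
  unfold Tk. rewrite Cmod_div by exact Hden. rewrite Cmod_Cscal, Rabs_pos_eq by lra.
  apply Rle_trans with (2 * Cmod w / (beta k * beta k / 2)).
  - unfold Rdiv. apply Rmult_le_compat_l. lra. apply Rinv_le_contravar. nra. lra.
  - right. field. lra.
Qed.

Definition Clim (u : nat -> C) (L : C) : Prop :=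
  is_lim_seq (fun n => fst (u n)) (fst L) /\ is_lim_seq (fun n => snd (u n)) (snd L).

Lemma Clim_ext u v L : (forall n, u n = v n) -> Clim u L -> Clim v L.
Proof. intros E [H1 H2]; split; eapply is_lim_seq_ext; try eassumption; intros; simpl; rewrite E; auto. Qed.
Lemma Clim_const L : Clim (fun _ => L) L.
Proof. split; apply is_lim_seq_const. Qed.
Lemma Clim_plus u v L1 L2 : Clim u L1 -> Clim v L2 -> Clim (fun n => Cplus (u n) (v n)) (Cplus L1 L2).
Proof. intros [a b] [c d]; split; simpl; apply is_lim_seq_plus'; auto. Qed.
Lemma Clim_minus u v L1 L2 : Clim u L1 -> Clim v L2 -> Clim (fun n => Cminus (u n) (v n)) (Cminus L1 L2).
Proof. intros [a b] [c d]; split; simpl.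
  eapply is_lim_seq_ext. 2: apply (is_lim_seq_minus' _ _ _ _ a c). intros; simpl; ring.
  eapply is_lim_seq_ext. 2: apply (is_lim_seq_minus' _ _ _ _ b d). intros; simpl; ring. Qed.
Lemma Clim_mult u v L1 L2 : Clim u L1 -> Clim v L2 -> Clim (fun n => Cmult (u n) (v n)) (Cmult L1 L2).
Proof. intros [a b] [c d]; split; simpl.
  apply is_lim_seq_minus'; apply is_lim_seq_mult'; auto.
  apply is_lim_seq_plus'; apply is_lim_seq_mult'; auto. Qed.
Lemma Clim_inv u L : Clim u L -> L <> CR 0 -> Clim (fun n => Complex.Cinv (u n)) (Complex.Cinv L).
Proof. intros [a b] HL.
  assert (Hd : fst L ^ 2 + snd L ^ 2 <> 0).
  { intro E. apply HL. destruct L as [x y]; simpl in E. 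
    assert (x = 0) by nra. assert (y = 0) by nra. subst. reflexivity. }
  assert (D : is_lim_seq (fun n => fst (u n) ^ 2 + snd (u n) ^ 2) (fst L ^ 2 + snd L ^ 2)).
  { apply is_lim_seq_plus'.
    - eapply is_lim_seq_ext. 2: replace (fst L ^ 2) with (fst L * fst L) by ring; apply (is_lim_seq_mult' _ _ _ _ a a).
      intros; simpl; ring.
    - eapply is_lim_seq_ext. 2: replace (snd L ^ 2) with (snd L * snd L) by ring; apply (is_lim_seq_mult' _ _ _ _ b b).
      intros; simpl; ring. }
  split; simpl.
  - apply is_lim_seq_div'; auto.
  - apply is_lim_seq_div'; auto. 
    replace (- snd L) with (0 - snd L) by ring.
    eapply is_lim_seq_ext. 2: apply (is_lim_seq_minus' _ _ 0 _ (is_lim_seq_const 0) b). intros; simpl; ring.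
Qed.
Lemma Clim_div u v L1 L2 : Clim u L1 -> Clim v L2 -> L2 <> CR 0 ->
  Clim (fun n => Complex.Cdiv (u n) (v n)) (Complex.Cdiv L1 L2).
Proof. intros. unfold Complex.Cdiv. apply Clim_mult; auto. apply Clim_inv; auto. Qed.
Lemma Clim_R (r : nat -> R) (l : R) : is_lim_seq r l -> Clim (fun n => CR (r n)) (CR l).
Proof. intro H; split; simpl; auto. apply is_lim_seq_const. Qed.

Lemma Clim_csum (f : nat -> nat -> C) (L : nat -> C) K :
  (forall k, (k < K)%nat -> Clim (fun m => f m k) (L k)) -> Clim (fun m => csum (f m) K) (csum L K).
Proof. induction K; intros H; simpl. apply Clim_const.
  apply Clim_plus. apply IHK; intros; apply H; lia. apply H; lia. Qed.

Lemma Cmod_le_sum z : Cmod z <= Rabs (fst z) + Rabs (snd z).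
Proof. apply le_of_sq. apply Cmod_ge_0. pose proof (Rabs_pos (fst z)); pose proof (Rabs_pos (snd z)); lra.
  rewrite Cmod_sq. pose proof (sq_abs (fst z)); pose proof (sq_abs (snd z)).
  pose proof (Rabs_pos (fst z)); pose proof (Rabs_pos (snd z)). nra. Qed.

Lemma Clim_small u : Clim u (CR 0) -> forall eps, 0 < eps -> exists N, forall n, (N <= n)%nat -> Cmod (u n) <= eps.
Proof. intros [a b] eps He. apply is_lim_seq_Reals in a, b. simpl in a, b.
  destruct (a (eps/2) ltac:(lra)) as [N1 H1]. destruct (b (eps/2) ltac:(lra)) as [N2 H2].
  exists (max N1 N2). intros n Hn. eapply Rle_trans. apply Cmod_le_sum.
  specialize (H1 n ltac:(lia)). specialize (H2 n ltac:(lia)). unfold R_dist in *. rewrite Rminus_0_r in *. lra. Qed.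

Lemma lim_quot (f : R -> R) (l : R) (u : nat -> R) : derivable_pt_lim f 0 l -> f 0 = 0 ->
  is_lim_seq u 0 -> (forall n, u n <> 0) -> is_lim_seq (fun n => f (u n) / u n) l.
Proof. intros Hd H0 Hu Hn. apply is_lim_seq_Reals. apply is_lim_seq_Reals in Hu.
  intros eps He. destruct (Hd eps He) as [del Hdel].
  destruct (Hu del (cond_pos del)) as [N HN]. exists N. intros n Hn'.
  specialize (HN n Hn'). unfold R_dist in *. rewrite Rminus_0_r in HN.
  specialize (Hdel (u n) (Hn n) HN). rewrite Rplus_0_l, H0, Rminus_0_r in Hdel. exact Hdel. Qed.

Definition tm (m : nat) : R := 1 / (2 * 2 ^ m).
Lemma tm_pos m : 0 < tm m.
Proof. unfold tm. pose proof (pow2_pos m). apply Rdiv_lt_0_compat; lra. Qed.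
Lemma tm_lim : is_lim_seq tm 0.
Proof. eapply is_lim_seq_ext with (u := fun m => /2 * (/2) ^ m).
  - intro m. unfold tm. rewrite pow_inv. field. pose proof (pow2_pos m); lra.
  - replace 0 with (/2 * 0) by ring. apply is_lim_seq_mult'. apply is_lim_seq_const. 
    apply is_lim_seq_geom. rewrite Rabs_pos_eq; lra. Qed.

Lemma dlim1 x y : derivable_pt_lim (fun t => sin (t*x) * cosh (t*y)) 0 x.
Proof. apply is_derive_Reals. unfold cosh. auto_derive. auto. 
  rewrite !Rmult_0_l, sin_0, cos_0, Ropp_0, exp_0. field. Qed.
Lemma dlim2 x y : derivable_pt_lim (fun t => cos (t*x) * sinh (t*y)) 0 y.
Proof. apply is_derive_Reals. unfold sinh. auto_derive. auto. 
  rewrite !Rmult_0_l, sin_0, cos_0, Ropp_0, exp_0. field. Qed.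
Lemma dlim3 b : derivable_pt_lim (fun t => sin (t*b)) 0 b.
Proof. apply is_derive_Reals. auto_derive. auto. rewrite Rmult_0_l, cos_0. ring. Qed.

Lemma lim_cont (g : R -> R) (a : R) : continuity_pt g 0 -> is_lim_seq (fun m => g (tm m * a)) (g 0).
Proof. intro Hg. apply is_lim_seq_continuous. exact Hg. 
  replace 0 with (0 * a) by ring. apply is_lim_seq_mult'. apply tm_lim. apply is_lim_seq_const. Qed.

Lemma cos_beta k : cos (beta k) = 0.
Proof. apply cos_eq_0_1. exists (Z.of_nat k). rewrite <- INR_IZR_INZ. unfold beta. field. Qed.

Lemma Cmult_integral (x y : C) : Cmult x y = CR 0 -> x = CR 0 \/ y = CR 0.
Proof. intro H. destruct (Classical_Prop.classic (x = CR 0)) as [Hx|Hx]. left; auto. right.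
  replace y with (Cmult (Complex.Cinv x) (Cmult x y)) by (field; auto). rewrite H. ring. Qed.

Lemma beta_den_neq w k : Ccos w <> CR 0 -> Cminus (CR (beta k * beta k)) (Cmult w w) <> CR 0.
Proof. intros Hc E. apply Hc.
  assert (E2 : Cmult (Cminus w (CR (beta k))) (Cplus w (CR (beta k))) = CR 0).
  { transitivity (Complex.Copp (Cminus (CR (beta k * beta k)) (Cmult w w))).
    rewrite RtoC_mult. ring. rewrite E. ring. }
  apply Cmult_integral in E2. destruct E2 as [E2|E2].
  - assert (w = CR (beta k)) by (apply C_eq_of_sub; exact E2). subst. rewrite Ccos_R, cos_beta. reflexivity.
  - assert (w = Complex.Copp (CR (beta k))).
    { apply C_eq_of_sub. rewrite <- E2. ring. }
    subst. replace (Complex.Copp (CR (beta k))) with (CR (- beta k)) by (unfold Complex.RtoC, Complex.Copp; simpl; f_equal; ring).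
    rewrite Ccos_R, cos_neg, cos_beta. reflexivity.
Qed.

Ltac toC := match goal with |- ?a = ?b => change (@eq C a b) end.

Lemma Cinv0 : Complex.Cinv (CR 0) = CR 0.
Proof. unfold Complex.Cinv, Complex.RtoC; simpl. f_equal; unfold Rdiv; ring. Qed.

Lemma head_id t w c : t <> 0 ->
  Cscal t (Rf (Cscal t w) (t*c)) =
  Complex.Cdiv (Cmult (CR 2) (Cmult (Cscal (1/t) (Csin (Cscal t w))) (Ccos (Cscal t w))))
     (Cminus (CR ((sin (t*c)/t) * (sin (t*c)/t))) (Cmult (Cscal (1/t) (Csin (Cscal t w))) (Cscal (1/t) (Csin (Cscal t w))))).
Proof. intro Ht. unfold Rf, den. rewrite Csin2.
  set (S := (Csin (Cscal t w) : C)). set (B := (Ccos (Cscal t w) : C)). set (r := sin (t*c)).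
  assert (ES : @eq C S (Cmult (CR t) (Cscal (1/t) S))) by (rewrite Cscal_mult, Cmult_assoc, <- RtoC_mult; replace (t * (1/t)) with 1 by (field; auto); ring).
  set (a := Cscal (1/t) S) in *. clearbody a. 
  assert (Er : r = t * (r / t)) by (field; auto). set (q := r / t) in *. clearbody q. rewrite Er. rewrite ES.
  rewrite Cscal_mult. rewrite !RtoC_mult. toC.
  destruct (classic (Cminus (Cmult (CR q) (CR q)) (Cmult a a) = CR 0)) as [D|D].
  - unfold Complex.Cdiv. 
    replace (Cminus (Cmult (Cmult (CR t) (CR q)) (Cmult (CR t) (CR q))) (Cmult (Cmult (CR t) a) (Cmult (CR t) a)))
      with (Cmult (Cmult (CR t) (CR t)) (Cminus (Cmult (CR q) (CR q)) (Cmult a a))) by ring.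
    rewrite D, Cmult_0_r, Cinv0. ring.
  - assert (CR t <> CR 0) by (intro X; apply RtoC_inj in X; auto). field. split; auto.
    replace (Cminus (Cmult (Cmult (CR t) (CR q)) (Cmult (CR t) (CR q))) (Cmult (Cmult (CR t) a) (Cmult (CR t) a)))
      with (Cmult (Cmult (CR t) (CR t)) (Cminus (Cmult (CR q) (CR q)) (Cmult a a))) by ring.
    apply Cmult_neq_0; auto. apply Cmult_neq_0; auto.
Qed.

Lemma tm_neq m : tm m <> 0.
Proof. pose proof (tm_pos m); lra. Qed.

Lemma head_lim w k : Ccos w <> CR 0 ->
  Clim (fun m => Cscal (tm m) (Rf (Cscal (tm m) w) (bk (2^m) k))) (Tk w k).
Proof.
  intro Hc. pose proof (beta_den_neq w k Hc) as Hd.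
  assert (Eb : forall m, bk (2^m) k = tm m * beta k) by (intro m; unfold bk, tm, beta; field; pose proof (pow2_pos m); lra).
  eapply Clim_ext. { intro m. rewrite Eb. symmetry. apply head_id. apply tm_neq. }
  destruct w as [x y].
  assert (HA : Clim (fun m => Cscal (1 / tm m) (Csin (Cscal (tm m) (x, y)))) (x, y)).
  { split; simpl.
    - eapply is_lim_seq_ext. 2: apply (lim_quot _ _ tm (dlim1 x y)); [rewrite !Rmult_0_l, sin_0; ring | apply tm_lim | apply tm_neq].
      intro m. unfold Csin, Cscal, Defs.Re, Defs.Im; simpl. field. apply tm_neq.
    - eapply is_lim_seq_ext. 2: apply (lim_quot _ _ tm (dlim2 x y)); [rewrite !Rmult_0_l, sinh_0; ring | apply tm_lim | apply tm_neq].
      intro m. unfold Csin, Cscal, Defs.Re, Defs.Im; simpl. field. apply tm_neq. }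
  assert (HB : Clim (fun m => Ccos (Cscal (tm m) (x, y))) (CR 1)).
  { assert (Lc : forall a, is_lim_seq (fun m => cos (tm m * a)) 1) by (intro a; rewrite <- cos_0; apply lim_cont; apply continuity_cos).
    assert (Ls : forall a, is_lim_seq (fun m => sin (tm m * a)) 0) by (intro a; rewrite <- sin_0; apply lim_cont; apply continuity_sin).
    assert (Lch : forall a, is_lim_seq (fun m => cosh (tm m * a)) 1) by (intro a; rewrite <- cosh_0; apply lim_cont; apply derivable_continuous_pt, derivable_pt_cosh).
    assert (Lsh : forall a, is_lim_seq (fun m => sinh (tm m * a)) 0) by (intro a; rewrite <- sinh_0; apply lim_cont; apply derivable_continuous_pt, derivable_pt_sinh).
    split; simpl.
    - replace 1 with (1 * 1) by ring. apply is_lim_seq_mult'; auto.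
    - replace 0 with (0 - 0 * 0) by ring.
      eapply is_lim_seq_ext. 2: apply (is_lim_seq_minus' _ _ 0 _ (is_lim_seq_const 0) (is_lim_seq_mult' _ _ _ _ (Ls x) (Lsh y))).
      intros; simpl; ring. }
  assert (HS : is_lim_seq (fun m => sin (tm m * beta k) / tm m) (beta k)).
  { apply (lim_quot (fun t => sin (t * beta k))). apply dlim3. rewrite Rmult_0_l, sin_0; auto. apply tm_lim. apply tm_neq. }
  assert (E : Tk (x,y) k = Complex.Cdiv (Cmult (CR 2) (Cmult (x,y) (CR 1))) (Cminus (CR (beta k * beta k)) (Cmult (x,y) (x,y)))).
  { unfold Tk. rewrite Cscal_mult. f_equal. ring. }
  rewrite E. apply Clim_div; auto.
  - apply Clim_mult. apply Clim_const. apply Clim_mult; auto.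
  - apply Clim_minus; auto. apply Clim_R. apply is_lim_seq_mult'; auto. apply Clim_mult; auto.
Qed.

Fixpoint rsum (f : nat -> R) (n : nat) : R :=
  match n with O => 0 | S n => rsum f n + f n end.
Lemma Cmod_csum f n : Cmod (csum f n) <= rsum (fun k => Cmod (f k)) n.
Proof. induction n; simpl. rewrite Cmod_0; lra. eapply Rle_trans. apply Cmod_triangle. lra. Qed.
Lemma rsum_le f g n : (forall k, (k < n)%nat -> f k <= g k) -> rsum f n <= rsum g n.
Proof. induction n; simpl; intros. lra. pose proof (H n ltac:(lia)). pose proof (IHn ltac:(intros; apply H; lia)). lra. Qed.
Lemma rsum_scal c f n : rsum (fun k => c * f k) n = c * rsum f n.
Proof. induction n; simpl. ring. rewrite IHn. ring. Qed.
Lemma rsum_tele K len : (1 <= K)%nat ->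
  rsum (fun j => 1 / (INR (K + j) * (INR (K + j) + 1))) len = 1 / INR K - 1 / INR (K + len).
Proof. intro HK. induction len; simpl.
  - rewrite Nat.add_0_r. ring.
  - rewrite IHlen. assert (0 < INR (K + len)) by (apply lt_0_INR; lia).
    replace (K + S len)%nat with (S (K + len)) by lia. rewrite S_INR. assert (1 <= INR K) by (apply (le_INR 1); lia). field. repeat split; lra.
Qed.
Lemma csum_zero n : csum (fun _ => CR 0) n = CR 0.
Proof. induction n; simpl. auto. rewrite IHn. ring. Qed.
Lemma csum_Cscal r f n : Cscal r (csum f n) = csum (fun k => Cscal r (f k)) n.
Proof. rewrite Cscal_mult. rewrite <- csum_mult. apply csum_ext. intros. rewrite Cscal_mult. auto. Qed.
Lemma csum_minus f g n : csum (fun k => Cminus (f k) (g k)) n = Cminus (csum f n) (csum g n).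
Proof. induction n; simpl. ring. rewrite IHn. ring. Qed.

Lemma beta_sq_ge k : 9 * (INR k * (INR k + 1)) <= beta k * beta k.
Proof. pose proof (beta_ge k). pose proof (pos_INR k). nra. Qed.

Lemma pow2_ge m : (m <= 2 ^ m)%nat.
Proof. induction m; simpl. lia. pose proof (Nat.pow_nonzero 2 m). lia. Qed.

Lemma nat_unbounded r : exists n : nat, r < INR n.
Proof. destruct (archimed r) as [H1 _]. destruct (Z_lt_le_dec (up r) 0).
  - exists 0%nat. simpl. apply IZR_lt in l. lra.
  - exists (Z.to_nat (up r)). rewrite INR_IZR_INZ, Z2Nat.id by lia. lra. Qed.

Lemma decomp (g T : nat -> C) K N n : (K <= N)%nat -> (N <= n)%nat ->
  Cminus (csum g n) (csum T N) =
  Cplus (Cplus (csum (fun k => Cminus (g k) (T k)) K) (csum (fun j => Cminus (g (K+j)%nat) (T (K+j)%nat)) (n-K)))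
        (csum (fun j => T (N+j)%nat) (n-N)).
Proof. intros H1 H2. rewrite !csum_minus.
  replace n with (K + (n - K))%nat at 1 by lia. rewrite csum_split.
  assert (E : csum T n = Cplus (csum T N) (csum (fun j => T (N + j)%nat) (n - N))).
  { replace n with (N + (n - N))%nat at 1 by lia. apply csum_split. }
  assert (E2 : csum T n = Cplus (csum T K) (csum (fun j => T (K + j)%nat) (n - K))).
  { replace n with (K + (n - K))%nat at 1 by lia. apply csum_split. }
  apply C_eq_of_sub. 
  transitivity (Cplus (Cminus (csum T n) (Cplus (csum T N) (csum (fun j => T (N + j)%nat) (n - N))))
     (Complex.Copp (Cminus (csum T n) (Cplus (csum T K) (csum (fun j => T (K + j)%nat) (n - K)))))).
  - ring.
  - rewrite <- E, <- E2. ring.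
Qed.

Theorem tan_series w : Ccos w <> CR 0 -> forall eps, 0 < eps ->
  exists N0, forall N, (N0 <= N)%nat -> Cmod (Cminus (Ctan w) (csum (Tk w) N)) <= eps.
Proof.
  intros Hc eps He. set (W := Cmod w). pose proof (Cmod_ge_0 w) as Wp. fold W in Wp.
  destruct (nat_unbounded (13 * W + 76 * W / eps + 1)) as [K HK].
  assert (HW : 0 <= 76 * W / eps) by (apply Rmult_le_pos; [lra| left; apply Rinv_0_lt_compat; lra]).
  assert (HK1 : (1 <= K)%nat) by (apply INR_le; simpl; lra).
  assert (HKr : 38 * W / INR K <= eps / 2).
  { assert (76 * W <= eps * INR K).
    { assert (76 * W / eps * eps = 76 * W) by (field; lra). nra. }
    apply Rmult_le_reg_r with (INR K). lra. field_simplify; lra. }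
  exists K. intros N HN.
  set (e := fun m k => Cminus (Cscal (tm m) (Rf (Cscal (tm m) w) (bk (2^m) k))) (Tk w k)).
  assert (Hh : Clim (fun m => csum (e m) K) (CR 0)).
  { rewrite <- (csum_zero K). 
    replace (csum (fun _ => CR 0) K) with (csum (fun k => Cminus (Tk w k) (Tk w k)) K) by (apply csum_ext; intros; ring).
    apply Clim_csum. intros k _. unfold e. apply Clim_minus. apply head_lim; auto. apply Clim_const. }
  destruct (Clim_small _ Hh (eps/2) ltac:(lra)) as [M0 HM0].
  set (m := (M0 + N)%nat). specialize (HM0 m ltac:(unfold m; lia)).
  set (n := (2^m)%nat). assert (HNn : (N <= n)%nat) by (unfold n; pose proof (pow2_ge m); unfold m in *; lia).
  destruct (iter m w Hc) as [_ Ht].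
  assert (Etm : 1 / (2 * 2^m) = tm m) by reflexivity. rewrite Etm in Ht. rewrite csum_Cscal in Ht.
  fold n in Ht. rewrite Ht.
  rewrite (decomp _ _ K N n) by lia.
  set (g := fun k => Cscal (tm m) (Rf (Cscal (tm m) w) (bk (2 ^ m) k))).
  assert (Hn : 2 ^ m = INR n) by (unfold n; rewrite pow_INR; reflexivity).
  assert (Hb : forall k, (K <= k)%nat -> 39 * W <= beta k).
  { intros k Hk. pose proof (beta_ge k). apply le_INR in Hk. lra. }
  assert (Te : forall j, (j < n - K)%nat -> Cmod (Cminus (g (K+j)%nat) (Tk w (K+j)%nat)) <= 37 * W * (1 / (INR (K + j) * (INR (K + j) + 1)))).
  { intros j Hj. 
    assert (Hkn : (K + j < n)%nat) by lia.
    assert (HbK : 39 * W <= beta (K+j)) by (apply Hb; lia).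
    assert (H1 := tail_Rf (2^m) n (K+j) w Hn Hkn HbK). rewrite Etm in H1.
    assert (H2 := tail_Tk w (K+j) HbK).
    pose proof (beta_sq_ge (K+j)). pose proof (beta_pos (K+j)).
    assert (0 < INR (K+j)) by (apply lt_0_INR; lia).
    unfold Cminus. eapply Rle_trans. apply Cmod_triangle. rewrite Cmod_opp.
    unfold g. fold W in H1, H2. 
    apply Rle_trans with (332 * W / (beta (K+j) * beta (K+j))). 
    { set (X := beta (K + j) * beta (K + j)) in *.
      replace (324 * W / X) with (324 * (W / X)) in H1 by (unfold Rdiv; ring).
      replace (4 * W / X) with (4 * (W / X)) in H2 by (unfold Rdiv; ring).
      replace (332 * W / X) with (332 * (W / X)) by (unfold Rdiv; ring). 
      assert (0 <= W / X) by (apply Rmult_le_pos; [lra| left; apply Rinv_0_lt_compat; unfold X; nra]). lra. }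
    set (P := INR (K + j) * (INR (K + j) + 1)) in *. assert (0 < P) by (unfold P; nra).
    set (X := beta (K + j) * beta (K + j)) in *.
    assert (HX : / X <= / 9 * / P) by (rewrite <- Rinv_mult; apply Rinv_le_contravar; nra).
    assert (0 <= W * / P) by (apply Rmult_le_pos; [lra| left; apply Rinv_0_lt_compat; lra]).
    apply Rle_trans with (332 * W * (/9 * / P)).
    - unfold Rdiv. apply Rmult_le_compat_l; nra.
    - replace (332 * W * (/9 * / P)) with (332 / 9 * (W * / P)) by (field; lra).
      replace (37 * W * (1 / P)) with (37 * (W * / P)) by (field; lra). lra. }
  assert (TT : forall j, (j < n - N)%nat -> Cmod (Tk w (N+j)%nat) <= W * (1 / (INR (N + j) * (INR (N + j) + 1)))).
  { intros j Hj. assert (HbK : 39 * W <= beta (N+j)) by (apply Hb; lia).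
    assert (H2 := tail_Tk w (N+j) HbK). fold W in H2.
    pose proof (beta_sq_ge (N+j)). pose proof (beta_pos (N+j)).
    assert (0 < INR (N+j)) by (apply lt_0_INR; lia).
    eapply Rle_trans. exact H2.
    set (P := INR (N + j) * (INR (N + j) + 1)) in *. assert (0 < P) by (unfold P; nra).
    set (X := beta (N + j) * beta (N + j)) in *.
    assert (HX : / X <= / 9 * / P) by (rewrite <- Rinv_mult; apply Rinv_le_contravar; nra).
    assert (0 <= W * / P) by (apply Rmult_le_pos; [lra| left; apply Rinv_0_lt_compat; lra]).
    apply Rle_trans with (4 * W * (/9 * / P)).
    - unfold Rdiv. apply Rmult_le_compat_l; nra.
    - replace (4 * W * (/9 * / P)) with (4 / 9 * (W * / P)) by (field; lra).
      replace (W * (1 / P)) with (W * / P) by (field; lra). lra. }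
  assert (S1 : Cmod (csum (fun j => Cminus (g (K+j)%nat) (Tk w (K+j)%nat)) (n-K)) <= 37 * W * (1 / INR K)).
  { eapply Rle_trans. apply Cmod_csum. eapply Rle_trans. apply rsum_le. exact Te.
    rewrite rsum_scal, rsum_tele by lia. assert (0 < 1 / INR (K + (n - K))) by (apply Rdiv_lt_0_compat; [lra| apply lt_0_INR; lia]). nra. }
  assert (S2 : Cmod (csum (fun j => Tk w (N+j)%nat) (n-N)) <= W * (1 / INR K)).
  { eapply Rle_trans. apply Cmod_csum. eapply Rle_trans. apply rsum_le. exact TT.
    rewrite rsum_scal, rsum_tele by lia. assert (0 < 1 / INR (N + (n - N))) by (apply Rdiv_lt_0_compat; [lra| apply lt_0_INR; lia]).
    assert (1 / INR N <= 1 / INR K).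
    { apply Rmult_le_compat_l. lra. apply Rinv_le_contravar. apply lt_0_INR; lia. apply le_INR; lia. }
    nra. }
  eapply Rle_trans. apply Cmod_triangle. eapply Rle_trans. apply Rplus_le_compat_r. apply Cmod_triangle.
  unfold e, g in *. cbv beta in *.
  assert (38 * W / INR K = 37 * W * (1 / INR K) + W * (1 / INR K)) by (field; apply not_0_INR; lia).
  lra.
Qed.

Lemma Cpartial_csum (f : nat -> C) N : Cpartial f N = csum f (S N).
Proof. induction N; simpl. toC. ring. rewrite IHN. reflexivity. Qed.

Lemma series_conv (term : nat -> C) (Kc wp wq : C) :
  Ccos wp <> CR 0 -> Ccos wq <> CR 0 ->
  (forall n, term n = Cmult Kc (Cplus (Tk wp n) (Tk wq n))) ->
  Cseries_sum term (Cmult Kc (Cplus (Ctan wp) (Ctan wq))).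
Proof.
  intros Hp Hq Ht.
  assert (Main : forall eps, 0 < eps -> exists N0, forall N, (N0 <= N)%nat ->
            Cmod (Cminus (Cmult Kc (Cplus (Ctan wp) (Ctan wq))) (Cpartial term N)) <= eps).
  { intros eps He. set (k := Cmod Kc + 1). assert (0 < k) by (unfold k; pose proof (Cmod_ge_0 Kc); lra).
    destruct (tan_series wp Hp (eps / (2*k)) ltac:(apply Rdiv_lt_0_compat; lra)) as [N1 H1].
    destruct (tan_series wq Hq (eps / (2*k)) ltac:(apply Rdiv_lt_0_compat; lra)) as [N2 H2].
    exists (max N1 N2). intros N HN. rewrite Cpartial_csum.
    rewrite (csum_ext _ (fun n => Cmult Kc (Cplus (Tk wp n) (Tk wq n)))) by (intros; apply Ht).
    rewrite csum_mult, csum_add.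
    specialize (H1 (S N) ltac:(lia)). specialize (H2 (S N) ltac:(lia)).
    replace (Cminus (Cmult Kc (Cplus (Ctan wp) (Ctan wq))) (Cmult Kc (Cplus (csum (Tk wp) (S N)) (csum (Tk wq) (S N)))))
      with (Cmult Kc (Cplus (Cminus (Ctan wp) (csum (Tk wp) (S N))) (Cminus (Ctan wq) (csum (Tk wq) (S N))))) by ring.
    rewrite Cmod_mult. pose proof (Cmod_triangle (Cminus (Ctan wp) (csum (Tk wp) (S N))) (Cminus (Ctan wq) (csum (Tk wq) (S N)))).
    pose proof (Cmod_ge_0 Kc).
    apply Rle_trans with (Cmod Kc * (eps / (2 * k) + eps / (2 * k))).
    - apply Rmult_le_compat_l. auto. lra.
    - replace (eps / (2 * k) + eps / (2 * k)) with (eps / k) by (field; lra).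
      apply Rle_trans with (k * (eps / k)). apply Rmult_le_compat_r. left; apply Rdiv_lt_0_compat; lra. unfold k; lra.
      right; field; lra. }
  split; intros eps He;
  destruct (Main (eps/2) ltac:(lra)) as [N0 HN]; exists N0; intros N HN'; specialize (HN N HN'); unfold R_dist.
  - rewrite Rabs_minus_sym. apply Rle_lt_trans with (eps/2); [|lra].
    eapply Rle_trans; [|exact HN]. eapply Rle_trans; [|apply fst_le_Cmod]. right; reflexivity.
  - rewrite Rabs_minus_sym. apply Rle_lt_trans with (eps/2); [|lra].
    eapply Rle_trans; [|exact HN]. eapply Rle_trans; [|apply snd_le_Cmod]. right; reflexivity.
Qed.

Lemma Cmul_C x y : Cmul x y = Cmult x y. Proof. reflexivity. Qed.
Lemma Cadd_C x y : Cadd x y = Cplus x y. Proof. reflexivity. Qed.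
Lemma Csub_C x y : Csub x y = Cminus x y. Proof. reflexivity. Qed.
Lemma Copp_C x : Defs.Copp x = Complex.Copp x. Proof. reflexivity. Qed.
Lemma Cinv_C x : Defs.Cinv x = Complex.Cinv x. Proof. reflexivity. Qed.
Lemma Cdiv_C x y : Defs.Cdiv x y = Complex.Cdiv x y. Proof. reflexivity. Qed.
Lemma RtoC_C x : Defs.RtoC x = Complex.RtoC x. Proof. reflexivity. Qed.

Lemma poch_S (z : C) n : poch z (S n) = Cmult (poch z n) (Cplus z (CR (INR n))).
Proof. reflexivity. Qed.
Lemma poch_0 z : poch z 0 = CR 1. Proof. reflexivity. Qed.

Lemma poch_rel (z : C) n : Cmult (poch z n) (Cplus z (CR (INR n))) = Cmult z (poch (Cplus z (CR 1)) n).
Proof. rewrite <- poch_S. induction n.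
  - rewrite poch_S, !poch_0. simpl INR. toC. ring.
  - rewrite poch_S, IHn, (poch_S (Cplus z (CR 1)) n). rewrite S_INR, RtoC_plus. toC. ring. Qed.

Lemma poch_one n : poch (CR 1) n = CR (INR (fact n)).
Proof. induction n. reflexivity. rewrite poch_S, IHn. replace (fact (S n)) with (S n * fact n)%nat by reflexivity.
  rewrite mult_INR, S_INR, !RtoC_mult, RtoC_plus. toC. ring. Qed.

Lemma poch_nz (z : C) n : ~ in_Z0minus z -> poch z n <> CR 0.
Proof. intro Hz. induction n. rewrite poch_0. intro X. apply RtoC_inj in X. lra.
  rewrite poch_S. apply Cmult_neq_0. auto. intro E. apply Hz. exists n.
  rewrite RtoC_C. apply C_eq_of_sub. rewrite <- E. destruct z. unfold Cminus, Cplus, Complex.Copp, Complex.RtoC; simpl; f_equal; ring. Qed.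

Lemma Cprod_ones n st : Cprod (map (fun _ => Defs.RtoC 1) (seq st n)) = CR 1.
Proof. revert st; induction n; intro st. reflexivity. simpl. rewrite IHn. unfold Cmul, Defs.RtoC, Complex.RtoC, Defs.Re, Defs.Im; simpl. f_equal; ring. Qed.

Lemma cosh_pos y : 0 < cosh y.
Proof. unfold cosh. pose proof (exp_pos y); pose proof (exp_pos (-y)). lra. Qed.
Lemma sinh_zero y : sinh y = 0 -> y = 0.
Proof. intro H. destruct (Rtotal_order y 0) as [X|[X|X]]; auto.
  - pose proof (sinh_lt _ _ X). rewrite sinh_0 in H0. lra.
  - pose proof (sinh_lt _ _ X). rewrite sinh_0 in H0. lra. Qed.

Lemma Ccos_nz w : (forall k : Z, w <> CR ((IZR k + 1/2) * PI)) -> Ccos w <> CR 0.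
Proof. intros Hw E. destruct w as [x y]. unfold Ccos, Defs.Re, Defs.Im, Complex.RtoC in E; simpl in E.
  injection E as E1 E2. pose proof (cosh_pos y).
  assert (Hc : cos x = 0) by (apply Rmult_integral in E1; destruct E1; auto; lra).
  assert (Hs : sin x <> 0) by (intro X; pose proof (sin2_cos2 x); unfold Rsqr in *; rewrite X, Hc in H0; lra).
  assert (Hy : y = 0) by (apply sinh_zero; assert (sin x * sinh y = 0) by lra; apply Rmult_integral in H0; destruct H0; auto; contradiction).
  destruct (cos_eq_0_0 x Hc) as [k Hk]. apply (Hw k). subst. unfold Complex.RtoC. f_equal. field. Qed.

Lemma Csin_opp u : Csin (Complex.Copp u) = Complex.Copp (Csin u).
Proof. destruct u as [x y]. unfold Csin, Complex.Copp, Defs.Re, Defs.Im; simpl. rewrite sin_neg, cos_neg, cosh_opp, sinh_opp. f_equal; ring. Qed.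
Lemma Ccos_opp u : Ccos (Complex.Copp u) = Ccos u.
Proof. destruct u as [x y]. unfold Ccos, Complex.Copp, Defs.Re, Defs.Im; simpl. rewrite sin_neg, cos_neg, cosh_opp, sinh_opp. f_equal; ring. Qed.

Lemma Cseries_ext (f g : nat -> C) L L' : (forall n, f n = g n) -> L = L' -> Cseries_sum g L' -> Cseries_sum f L.
Proof. intros E EL [H1 H2]. subst. assert (forall N, Cpartial f N = Cpartial g N).
  { intro N; rewrite !Cpartial_csum; apply csum_ext; auto. }
  split; eapply Un_cv_ext; try eassumption; intro N; rewrite H; reflexivity. Qed.

Lemma CR_half : CR (1/2) = Complex.Cinv (CR 2).
Proof. unfold Complex.Cinv, Complex.RtoC; simpl; f_equal; field. Qed.
Lemma CR_quarter : CR (1/4) = Complex.Cinv (CR 4).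
Proof. unfold Complex.Cinv, Complex.RtoC; simpl; f_equal; field. Qed.

Lemma stepB (p q : C) (n : nat) :
  let x := Cplus (CR (INR n)) (CR (1/2)) in
  let t1 := Cminus (CR (1/2)) p in let t2 := Cminus (CR (1/2)) q in
  let t3 := Cplus (CR (1/2)) p in let t4 := Cplus (CR (1/2)) q in
  Cminus x p <> CR 0 -> Cminus x q <> CR 0 -> Cplus x p <> CR 0 -> Cplus x q <> CR 0 ->
  Cminus (CR (1/4)) (Cmult p q) <> CR 0 -> Cplus p q <> CR 0 ->
  Cmult (Complex.Cdiv (Cminus (Cmult x x) (Cmult p q)) (Cminus (CR (1/4)) (Cmult p q)))
    (Cmult (Complex.Cdiv t1 (Cminus x p)) (Cmult (Complex.Cdiv t2 (Cminus x q))
       (Cmult (Complex.Cdiv t3 (Cplus x p)) (Complex.Cdiv t4 (Cplus x q)))))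
  = Cmult (Cmult (Complex.Cdiv (Cmult (Cmult t1 t2) (Cmult t3 t4)) (Cmult (Cminus (CR (1/4)) (Cmult p q)) (Cplus p q)))
                 (Complex.Cdiv (CR PI) (CR 2)))
      (Cplus (Tk (Cmult (CR PI) p) n) (Tk (Cmult (CR PI) q) n)).
Proof.
  intros x t1 t2 t3 t4 h1 h2 h3 h4 h5 h6.
  unfold Tk, beta. rewrite !Cscal_mult, !RtoC_mult, RtoC_plus.
  fold x. unfold t1, t2, t3, t4. 
  assert (HP : CR PI <> CR 0) by (intro X; apply RtoC_inj in X; pose proof PI_RGT_0; lra).
  assert (D1 : Cminus (Cmult (Cmult x (CR PI)) (Cmult x (CR PI))) (Cmult (Cmult (CR PI) p) (Cmult (CR PI) p)) 
                = Cmult (Cmult (CR PI) (CR PI)) (Cmult (Cminus x p) (Cplus x p))) by ring.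
  assert (D2 : Cminus (Cmult (Cmult x (CR PI)) (Cmult x (CR PI))) (Cmult (Cmult (CR PI) q) (Cmult (CR PI) q)) 
                = Cmult (Cmult (CR PI) (CR PI)) (Cmult (Cminus x q) (Cplus x q))) by ring.
  rewrite D1, D2. rewrite CR_quarter in *. 
  field. repeat split; auto. 
  intro E. apply h5. simpl in E.
  replace (Cminus (Complex.Cinv (CR 4)) (Cmult p q)) with (Cmult (Complex.Cinv (CR 4)) (Cminus (CR 1) (Cmult (Cmult p q) (CR 4)))).
  rewrite E. ring. field.
Qed.

Lemma shift_nz (t : C) n : t <> CR 0 -> ~ in_Z0minus (Cadd (Defs.RtoC 1) t) -> Cplus t (CR (INR n)) <> CR 0.
Proof. intros H0 H1 E. destruct n. apply H0. rewrite <- E. simpl. toC. ring.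
  apply H1. exists n. rewrite RtoC_C. apply C_eq_of_sub. rewrite Cadd_C. rewrite <- E. rewrite S_INR.
  destruct t. unfold Cminus, Cplus, Complex.Copp, Complex.RtoC; simpl; f_equal; ring. Qed.

Lemma Z0_nz (z : C) : ~ in_Z0minus z -> z <> CR 0.
Proof. intros H E. apply H. exists 0%nat. rewrite E. unfold Defs.RtoC, Complex.RtoC. simpl. f_equal. ring. Qed.

Ltac convC := change Defs.Cmul with Cmult in *; change Defs.Cadd with Cplus in *; change Defs.Csub with Cminus in *;
  change Defs.Cdiv with Complex.Cdiv in *; change Defs.Cinv with Complex.Cinv in *; change Defs.Copp with Complex.Copp in *;
  change Defs.RtoC with Complex.RtoC in *.

Lemma Cprod_onesC n st : Cprod (map (fun _ => CR 1) (seq st n)) = CR 1.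
Proof. exact (Cprod_ones n st). Qed.

Lemma poch_up (z : C) n : z <> CR 0 -> poch (Cplus z (CR 1)) n = Complex.Cdiv (Cmult (poch z n) (Cplus z (CR (INR n)))) z.
Proof. intro Hz. rewrite poch_rel. generalize (poch (Cplus z (CR 1)) n). intro P. change C in P. toC. field. auto. Qed.
Lemma poch_down (t : C) n : Cplus t (CR (INR n)) <> CR 0 -> poch t n = Complex.Cdiv (Cmult t (poch (Cplus t (CR 1)) n)) (Cplus t (CR (INR n))).
Proof. intro Ht. rewrite <- poch_rel. generalize (poch t n). intro P. change C in P. toC. field. auto. Qed.

Lemma odd_witness (p : C) (k : Z) : p = CR (IZR k + 1/2) -> Cmult (CR 2) p = CR (IZR (2*k+1)).
Proof. intro E. rewrite E. rewrite plus_IZR, mult_IZR. unfold Cmult, Complex.RtoC; simpl. f_equal; field. Qed.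

Lemma t_nz_m (p : C) : ~ (exists k, Cmult (CR 2) p = CR (IZR (2*k+1))) -> Cminus (CR (1/2)) p <> CR 0.
Proof. intros H E. apply H. exists 0%Z. apply odd_witness. 
  replace p with (Cminus (CR (1/2)) (Cminus (CR (1/2)) p)) by ring. rewrite E.
  unfold Cminus, Cplus, Complex.Copp, Complex.RtoC; simpl; f_equal; ring. Qed.
Lemma t_nz_p (p : C) : ~ (exists k, Cmult (CR 2) p = CR (IZR (2*k+1))) -> Cplus (CR (1/2)) p <> CR 0.
Proof. intros H E. apply H. exists (-1)%Z. apply odd_witness. 
  replace p with (Cminus (Cplus (CR (1/2)) p) (CR (1/2))) by ring. rewrite E.
  unfold Cminus, Cplus, Complex.Copp, Complex.RtoC; simpl; f_equal; lra. Qed.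
Lemma cos_nz_p (p : C) : ~ (exists k, Cmult (CR 2) p = CR (IZR (2*k+1))) -> Ccos (Cmult (CR PI) p) <> CR 0.
Proof. intros H. apply Ccos_nz. intros k E. apply H. exists k. apply odd_witness.
  assert (HP : CR PI <> CR 0) by (intro X; apply RtoC_inj in X; pose proof PI_RGT_0; lra).
  replace p with (Cmult (Complex.Cinv (CR PI)) (Cmult (CR PI) p)) by (field; auto). rewrite E.
  rewrite RtoC_mult. toC. field_simplify; auto. Qed.

Theorem mainTheorem5 (a b c s : Cplx)
  (ha : a <> RtoC 0)
  (hb : 0 < Re b)
  (h1 : 0 < Re (Cadd (Cadd b a) c))
  (h2 : 0 < Re (Csub (Cadd b a) c))
  (h3 : 0 < Re (Cadd (Csub b a) c))
  (h4 : 0 < Re (Csub (Csub b a) c))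
  (hodd1 : ~ odd_int (Cdiv (Cadd a c) b))
  (hodd2 : ~ odd_int (Cdiv (Csub a c) b))
  (hs : Cmul s s = Csub (Cmul a a) (Cmul c c)) :
  let mu := Cdiv s (Cmul (RtoC 2) b) in
  let t1 := Csub (RtoC (1/2)) (Cdiv (Cadd a c) (Cmul (RtoC 2) b)) in
  let t2 := Csub (RtoC (1/2)) (Cdiv (Csub a c) (Cmul (RtoC 2) b)) in
  let t3 := Cadd (RtoC (1/2)) (Cdiv (Cadd a c) (Cmul (RtoC 2) b)) in
  let t4 := Cadd (RtoC (1/2)) (Cdiv (Csub a c) (Cmul (RtoC 2) b)) in
  let Q := Cmul (Cmul (Csub (Csub b a) c) (Cadd (Cadd b a) c))
                (Cmul (Cadd (Csub b a) c) (Csub (Cadd b a) c)) in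
  ~ in_Z0minus (Csub (RtoC (1/2)) mu) ->
  ~ in_Z0minus (Cadd (RtoC (1/2)) mu) ->
  ~ in_Z0minus (Cadd (RtoC 1) t1) ->
  ~ in_Z0minus (Cadd (RtoC 1) t2) ->
  ~ in_Z0minus (Cadd (RtoC 1) t3) ->
  ~ in_Z0minus (Cadd (RtoC 1) t4) ->
  pFq_eq
    [RtoC 1; Csub (RtoC (3/2)) mu; Cadd (RtoC (3/2)) mu; t1; t2; t3; t4]
    [Csub (RtoC (1/2)) mu; Cadd (RtoC (1/2)) mu;
     Cadd (RtoC 1) t1; Cadd (RtoC 1) t2; Cadd (RtoC 1) t3; Cadd (RtoC 1) t4]
    (RtoC 1)
    (Cmul
      (Cdiv (Cmul (RtoC PI) Q)
            (Cmul (RtoC 4)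
               (Cadd (Csub (Cmul a (Cmul b (Cmul b b))) (Cmul (Cmul a (Cmul a a)) b))
                     (Cmul a (Cmul b (Cmul c c))))))
      (Cdiv (Csin (Cdiv (Cmul a (RtoC PI)) b))
            (Cadd (Ccos (Cdiv (Cmul c (RtoC PI)) b)) (Ccos (Cdiv (Cmul a (RtoC PI)) b))))).
Proof. cbv zeta. intros Hm1 Hm2 H1 H2 H3 H4. unfold pFq_eq. unfold odd_int in hodd1, hodd2. convC.
  assert (Hb0 : b <> CR 0) by (intro E; rewrite E in hb; simpl in hb; lra).
  assert (H20 : CR 2 <> CR 0) by (intro E; apply RtoC_inj in E; lra).
  set (p := Complex.Cdiv (Cplus a c) (Cmult (CR 2) b)) in *.
  set (q := Complex.Cdiv (Cminus a c) (Cmult (CR 2) b)) in *.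
  set (mu := Complex.Cdiv s (Cmult (CR 2) b)) in *.
  assert (Hmu : Cmult mu mu = Cmult p q).
  { unfold mu, p, q. transitivity (Complex.Cdiv (Cmult s s) (Cmult (Cmult (CR 2) b) (Cmult (CR 2) b))).
    field; auto. rewrite hs. field; auto. }
  assert (Ep : Complex.Cdiv (Cplus a c) b = Cmult (CR 2) p) by (unfold p; field; auto).
  assert (Eq : Complex.Cdiv (Cminus a c) b = Cmult (CR 2) q) by (unfold q; field; auto).
  rewrite Ep in hodd1. rewrite Eq in hodd2.
  set (z1 := Cminus (CR (1/2)) mu) in *. set (z2 := Cplus (CR (1/2)) mu) in *.
  assert (Hz1 : z1 <> CR 0) by (apply Z0_nz; auto). assert (Hz2 : z2 <> CR 0) by (apply Z0_nz; auto).
  set (t1 := Cminus (CR (1/2)) p) in *. set (t2 := Cminus (CR (1/2)) q) in *.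
  set (t3 := Cplus (CR (1/2)) p) in *. set (t4 := Cplus (CR (1/2)) q) in *.
  assert (Ht1 : t1 <> CR 0) by (apply t_nz_m; auto). assert (Ht2 : t2 <> CR 0) by (apply t_nz_m; auto).
  assert (Ht3 : t3 <> CR 0) by (apply t_nz_p; auto). assert (Ht4 : t4 <> CR 0) by (apply t_nz_p; auto).
  assert (Hcp : Ccos (Cmult (CR PI) p) <> CR 0) by (apply cos_nz_p; auto).
  assert (Hcq : Ccos (Cmult (CR PI) q) <> CR 0) by (apply cos_nz_p; auto).
  set (Kc := Cmult (Complex.Cdiv (Cmult (Cmult t1 t2) (Cmult t3 t4)) (Cmult (Cminus (CR (1/4)) (Cmult p q)) (Cplus p q)))
                 (Complex.Cdiv (CR PI) (CR 2))).
  apply (Cseries_ext _ (fun n => Cmult Kc (Cplus (Tk (Cmult (CR PI) p) n) (Tk (Cmult (CR PI) q) n))) _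
           (Cmult Kc (Cplus (Ctan (Cmult (CR PI) p)) (Ctan (Cmult (CR PI) q))))).
  3: { apply series_conv; auto. }
  - intro n. unfold hyp_term. rewrite Cprod_onesC. unfold Cprod. simpl map. cbn [fold_right]. convC.
    assert (Hpq : Cplus p q <> CR 0).
    { intro E. apply ha. toC. replace a with (Cmult b (Cplus p q)) by (unfold p, q; toC; field; auto). rewrite E. ring. }
    set (x := Cplus (CR (INR n)) (CR (1/2))).
    assert (E1 : Cmult (Cplus z1 (CR (INR n))) (Cplus z2 (CR (INR n))) = Cminus (Cmult x x) (Cmult p q)).
    { rewrite <- Hmu. unfold z1, z2, x. ring. }
    assert (E2 : Cmult z1 z2 = Cminus (CR (1/4)) (Cmult p q)).
    { rewrite <- Hmu. unfold z1, z2. rewrite CR_half, CR_quarter. field. }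
    assert (Et1 : Cplus t1 (CR (INR n)) = Cminus x p) by (unfold t1, x; ring).
    assert (Et2 : Cplus t2 (CR (INR n)) = Cminus x q) by (unfold t2, x; ring).
    assert (Et3 : Cplus t3 (CR (INR n)) = Cplus x p) by (unfold t3, x; ring).
    assert (Et4 : Cplus t4 (CR (INR n)) = Cplus x q) by (unfold t4, x; ring).
    assert (Hn1 := shift_nz t1 n Ht1 H1). assert (Hn2 := shift_nz t2 n Ht2 H2).
    assert (Hn3 := shift_nz t3 n Ht3 H3). assert (Hn4 := shift_nz t4 n Ht4 H4).
    assert (P1 := poch_nz _ n H1). assert (P2 := poch_nz _ n H2). assert (P3 := poch_nz _ n H3). assert (P4 := poch_nz _ n H4).
    assert (Pz1 := poch_nz _ n Hm1). assert (Pz2 := poch_nz _ n Hm2).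
    assert (Hf : CR (INR (fact n)) <> CR 0) by (intro X; apply RtoC_inj in X; apply (INR_fact_neq_0 n); auto).
    rewrite poch_one.
    assert (E32 : CR (3/2) = Cplus (CR (1/2)) (CR 1)) by (rewrite <- RtoC_plus; f_equal; field).
    assert (Ez1 : Cminus (CR (3/2)) mu = Cplus z1 (CR 1)) by (unfold z1; rewrite E32; ring).
    assert (Ez2 : Cplus (CR (3/2)) mu = Cplus z2 (CR 1)) by (unfold z2; rewrite E32; ring).
    rewrite Ez1, Ez2.
    rewrite (poch_up z1 n Hz1), (poch_up z2 n Hz2).
    rewrite (poch_down t1 n Hn1), (poch_down t2 n Hn2), (poch_down t3 n Hn3), (poch_down t4 n Hn4).
    replace (Cplus t1 (CR 1)) with (Cplus (CR 1) t1) by ring. replace (Cplus t2 (CR 1)) with (Cplus (CR 1) t2) by ring.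
    replace (Cplus t3 (CR 1)) with (Cplus (CR 1) t3) by ring. replace (Cplus t4 (CR 1)) with (Cplus (CR 1) t4) by ring.
    set (A1 := poch z1 n) in *. set (A2 := poch z2 n) in *. set (B1 := poch (Cplus (CR 1) t1) n) in *.
    set (B2 := poch (Cplus (CR 1) t2) n) in *. set (B3 := poch (Cplus (CR 1) t3) n) in *. set (B4 := poch (Cplus (CR 1) t4) n) in *.
    clearbody A1 A2 B1 B2 B3 B4. change C in A1, A2, B1, B2, B3, B4.
    transitivity (Cmult (Complex.Cdiv (Cmult (Cplus z1 (CR (INR n))) (Cplus z2 (CR (INR n)))) (Cmult z1 z2))
      (Cmult (Complex.Cdiv t1 (Cplus t1 (CR (INR n)))) (Cmult (Complex.Cdiv t2 (Cplus t2 (CR (INR n))))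
        (Cmult (Complex.Cdiv t3 (Cplus t3 (CR (INR n)))) (Complex.Cdiv t4 (Cplus t4 (CR (INR n)))))))).
    { toC. field. repeat split; auto. }
    rewrite E1, E2, Et1, Et2, Et3, Et4.
    rewrite Et1 in Hn1. rewrite Et2 in Hn2. rewrite Et3 in Hn3. rewrite Et4 in Hn4.
    apply stepB; auto. rewrite <- E2. apply Cmult_neq_0; auto.
  - assert (Hpq : Cplus p q <> CR 0).
    { intro E. apply ha. toC. replace a with (Cmult b (Cplus p q)) by (unfold p, q; toC; field; auto). rewrite E. ring. }
    assert (E2 : Cmult z1 z2 = Cminus (CR (1/4)) (Cmult p q)).
    { rewrite <- Hmu. unfold z1, z2. rewrite CR_half, CR_quarter. field. }
    assert (Hq4 : Cminus (CR (1/4)) (Cmult p q) <> CR 0) by (rewrite <- E2; apply Cmult_neq_0; auto).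
    assert (Ea : Complex.Cdiv (Cmult a (CR PI)) b = Cplus (Cmult (CR PI) p) (Cmult (CR PI) q)) by (unfold p, q; field; auto).
    assert (Ec : Complex.Cdiv (Cmult c (CR PI)) b = Cplus (Cmult (CR PI) p) (Complex.Copp (Cmult (CR PI) q))) by (unfold p, q; field; auto).
    rewrite Ea, Ec, Csin_add, !Ccos_add, Csin_opp, Ccos_opp.
    unfold Ctan, Kc. 
    assert (HP : CR PI <> CR 0) by (intro X; apply RtoC_inj in X; pose proof PI_RGT_0; lra).
    set (Sp := Csin (Cmult (CR PI) p)) in *. set (Sq := Csin (Cmult (CR PI) q)) in *.
    set (Cp := Ccos (Cmult (CR PI) p)) in *. set (Cq := Ccos (Cmult (CR PI) q)) in *.
    clearbody Sp Sq Cp Cq. change C in Sp, Sq, Cp, Cq.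
    assert (Hsum : Cplus (Cminus (Cmult Cp Cq) (Cmult Sp (Complex.Copp Sq))) (Cminus (Cmult Cp Cq) (Cmult Sp Sq)) <> CR 0).
    { replace (Cplus (Cminus (Cmult Cp Cq) (Cmult Sp (Complex.Copp Sq))) (Cminus (Cmult Cp Cq) (Cmult Sp Sq)))
        with (Cmult (CR 2) (Cmult Cp Cq)) by ring. apply Cmult_neq_0; auto. apply Cmult_neq_0; auto. }
    assert (Hd : Cplus (Cminus (Cmult a (Cmult b (Cmult b b))) (Cmult (Cmult a (Cmult a a)) b)) (Cmult a (Cmult b (Cmult c c)))
                 = Cmult (Cmult (CR 4) (Cmult a (Cmult b (Cmult b b)))) (Cminus (CR (1/4)) (Cmult p q))).
    { unfold p, q. rewrite CR_quarter. toC. field. auto. }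
    rewrite Hd. set (D := Cminus (CR (1/4)) (Cmult p q)) in *. clearbody D.
    unfold t1, t2, t3, t4, p, q. rewrite CR_half. toC.
    assert (ha' : a <> CR 0) by exact ha.
    assert (Hac : Cplus (Cplus a c) (Cminus a c) <> CR 0).
    { replace (Cplus (Cplus a c) (Cminus a c)) with (Cmult (CR 2) a) by ring. apply Cmult_neq_0; auto. }
    field. repeat split; auto.
Qed.
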